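(* Let $\alpha_1,\dots,\alpha_n$ be PL arcs in the plane with a common endpoint $z$ such that $\alpha_i\cap\alpha_j$ is connected for all $i,j$. Then $\bigcup_{i=1}^n\alpha_i$ is a tree.
   Context: A set $X\subset\mathbb{R}^2$ is a tree if it is connected, simply connected, and homeomorphic to a union of finitely many straight line segments. *)

(* Defs.v *)
From HB Require Import structures.
From mathcomp Require Import all_boot all_order all_algebra.
From mathcomp Require Import all_classical all_reals all_analysis.
Set Implicit Arguments. Unset Strict Implicit. Unset Printing Implicit Defensive.
Import Order.TTheory GRing.Theory Num.Theory.
Import numFieldNormedType.Exports.
Local Open Scope classical_set_scope.
Local Open Scope ring_scope.

Section defs.
Variable R : realType.
Local Notation pt := (R * R)%type.

Definition I01 : set R := [set t | 0 <= t <= 1].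

Definition lerp (a b : pt) (t : R) : pt :=
  ((1 - t) * a.1 + t * b.1, (1 - t) * a.2 + t * b.2).

Definition segment (a b : pt) : set pt := lerp a b @` I01.

Definition PL_on01 (gamma : R -> pt) : Prop :=
  exists (k : nat) (t : nat -> R) (v : nat -> pt),
    [/\ (0 < k)%N, t 0%N = 0, t k = 1,
        (forall i, (i < k)%N -> t i < t i.+1) &
        (forall i, (i < k)%N -> forall s, t i <= s <= t i.+1 ->
            gamma s = lerp (v i) (v i.+1) ((s - t i) / (t i.+1 - t i)))].

(* A is a PL arc with endpoints x and y: the image of [0,1] under an injective
   piecewise-linear (hence continuous, hence homeomorphism onto its image) map
   gamma with gamma 0 = x and gamma 1 = y. *)
Definition PL_arc (A : set pt) (x y : pt) : Prop :=
  exists gamma : R -> pt,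
    [/\ PL_on01 gamma, {in I01 &, injective gamma},
        A = gamma @` I01, gamma 0 = x & gamma 1 = y].

Definition homeomorphic (X Y : set pt) : Prop :=
  exists (f g : pt -> pt),
    [/\ {within X, continuous f}, {within Y, continuous g},
        f @` X `<=` Y /\ g @` Y `<=` X,
        (forall x, X x -> g (f x) = x) & (forall y, Y y -> f (g y) = y)].

Definition path_connected (X : set pt) : Prop :=
  forall x y, X x -> X y ->
    exists p : R -> pt, [/\ {within I01, continuous p}, p @` I01 `<=` X,
                            p 0 = x & p 1 = y].

Definition loops_nullhomotopic (X : set pt) : Prop :=
  forall p : R -> pt, {within I01, continuous p} -> p @` I01 `<=` X ->
    p 0 = p 1 ->
    exists H : R * R -> pt,
      [/\ {within I01 `*` I01, continuous H}, H @` (I01 `*` I01) `<=` X,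
          (forall s, I01 s -> H (s, 0) = p s),
          (forall s, I01 s -> H (s, 1) = p 0) &
          (forall u, I01 u -> H (0, u) = p 0 /\ H (1, u) = p 0)].

Definition simply_connected (X : set pt) : Prop :=
  path_connected X /\ loops_nullhomotopic X.

Definition finite_segment_union_homeomorphic (X : set pt) : Prop :=
  exists (m : nat) (a b : 'I_m -> pt),
    homeomorphic X (\bigcup_(i in [set: 'I_m]) segment (a i) (b i)).

Definition tree (X : set pt) : Prop :=
  [/\ connected X, simply_connected X & finite_segment_union_homeomorphic X].
End defs.

(* Main.v *)
Require Import Defs.
From HB Require Import structures.
From mathcomp Require Import all_boot all_order all_algebra.
From mathcomp Require Import all_classical all_reals all_analysis.
From mathcomp.algebra_tactics Require Import ring lra.
Import Order.TTheory GRing.Theory Num.Theory.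
Import numFieldNormedType.Exports.
Local Open Scope classical_set_scope.
Local Open Scope ring_scope.
Set Implicit Arguments. Unset Strict Implicit. Unset Printing Implicit Defensive.
Section Gen.
Context {T U V : topologicalType}.

Lemma comp_within (A : set T) (B : set U) (f : T -> U) (g : U -> V) :
  {within A, continuous f} -> (forall x, A x -> B (f x)) ->
  {within B, continuous g} -> {within A, continuous (g \o f)}.
Proof.
move=> cf AB cg; apply/subspace_continuousP => x Ax.
have /subspace_continuousP cf' := cf; have /subspace_continuousP cg' := cg.
have h : f @ within A (nbhs x) --> within B (nbhs (f x)).
  move=> P /= nP.
  have := cf' x Ax _ nP; rewrite nbhs_simpl /= => H.
  have HA : within A (nbhs x) A by apply: withinT.
  by apply: filterS (filterI H HA) => y [] Hy Ay; apply: Hy; apply: AB.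
exact: (cvg_trans (cvg_app g h) (cg' _ (AB _ Ax))).
Qed.
End Gen.
Section Gen2.
Context {T1 T2 T3 : topologicalType}.
Lemma inv_cont (K : set T1) (G : T1 -> T2) (g : T1 -> T3) (f : T2 -> T3) :
  hausdorff_space T2 -> compact K -> {within K, continuous G} ->
  {within K, continuous g} ->
  (forall s, K s -> f (G s) = g s) -> {within G @` K, continuous f}.
Proof.
move=> hT cK cG cg fG; apply/continuous_closedP => W cW.
have := (continuous_closedP _).1 cg W cW.
move=> /closed_subspaceP [V cV VK].
apply/closed_subspaceP; exists (G @` (K `&` V)).
  apply: compact_closed => //; apply: continuous_compact.
    exact: continuous_subspaceW cG.
  exact: compact_closedI.
apply/seteqP; split => y.
  move=> [[s [Ks Vs] <-] _]; split; last by exists s.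
  have : (V `&` K) s by [].
  by rewrite VK => -[Ws _]; rewrite /preimage /= /from_subspace fG.
move=> [fy [s Ks Gs]]; split; last by exists s.
have : ((from_subspace K g) @^-1` W `&` K) s.
  by split => //; rewrite /preimage /from_subspace /= -fG // Gs.
by rewrite -VK => -[Vs _]; exists s.
Qed.
End Gen2.
Lemma pair_cont_at {T X Y : topologicalType} (f : T -> X) (g : T -> Y) (x : T) :
  {for x, continuous f} -> {for x, continuous g} ->
  {for x, continuous (fun s => (f s, g s))}.
Proof.
move=> cf cg W /= [[U V]] /= [Uf Vg] UVW.
rewrite nbhs_simpl /=; near=> s; apply: UVW; split => /=; near: s.
  exact: cf.
exact: cg.
Unshelve. all: by end_near. Qed.

Section PL.
Variable R : realType.
Local Notation pt := (R * R)%type.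

Lemma affine_cont (c d : R) : continuous (fun s : R => (s - c) / d).
Proof.
move=> x; apply: cvgMl; apply: cvgB; [exact: cvg_id | exact: cvg_cst].
Qed.

Lemma lerpf_cont (a b : pt) (phi : R -> R) : continuous phi ->
  continuous (fun s => lerp a b (phi s)).
Proof.
move=> cphi x; rewrite /lerp.
apply: (@pair_cont_at R^o R^o R^o (fun s => (1 - phi s) * a.1 + phi s * b.1)
   (fun s => (1 - phi s) * a.2 + phi s * b.2));
  (apply: cvgD; apply: cvgMl; [apply: cvgB; [exact: cvg_cst|exact: cphi]|exact: cphi]).
Qed.
End PL.
Section PL2.
Variable R : realType.
Local Notation pt := (R * R)%type.

Definition Icc (a b : R) : set R := [set s | a <= s <= b].

Lemma Icc_itv a b : Icc a b = `[a, b]%classic.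
Proof. by rewrite set_itvcc. Qed.

Lemma closed_Icc a b : closed (Icc a b).
Proof.
have -> : Icc a b = [set x | a <= x] `&` [set x | x <= b].
  by apply/seteqP; split => x /=; [move/andP|move=> [h1 h2]; apply/andP].
by apply: closedI; [exact: closed_ge|exact: closed_le].
Qed.

Lemma compact_Icc a b : compact (Icc a b).
Proof. rewrite Icc_itv; exact: segment_compact. Qed.

Lemma I01E : @I01 R = Icc 0 1.
Proof. by []. Qed.

Lemma PL_cont (g : R -> pt) : PL_on01 g -> {within @I01 R, continuous g}.
Proof.
move=> [k [t [v [k0 t0 tk tinc tg]]]].
have tmono : forall m, (m <= k)%N -> t 0%N <= t m.
  elim=> [//|m IH] mk; apply: le_trans (IH (ltnW mk)) _.
  exact/ltW/tinc.
suff H : forall m, (m <= k)%N -> {within Icc (t 0%N) (t m), continuous g}.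
  by rewrite I01E -t0 -tk; apply: H.
elim=> [_|m IH mk].
  have -> : Icc (t 0%N) (t 0%N) = [set t 0%N].
    by apply/seteqP; split => x /=; [move=> /andP[? ?]; apply/eqP; rewrite eq_le; apply/andP; split|move=> ->; apply/andP; split].
  exact: continuous_subspace1.
have -> : Icc (t 0%N) (t m.+1) = Icc (t 0%N) (t m) `|` Icc (t m) (t m.+1).
  apply/seteqP; split => x /=.
    move=> /andP[h1 h2]; have [xm|xm] := leP x (t m); [left|right]; apply/andP; split => //.
    exact: ltW.
  move=> [/andP[h1 h2]|/andP[h1 h2]]; apply/andP; split => //.
    exact: le_trans h2 (ltW (tinc _ mk)).
  exact: le_trans (tmono _ (ltnW mk)) h1.
apply: withinU_continuous; [exact: closed_Icc|exact: closed_Icc| exact: IH (ltnW mk)|].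
apply: (@subspace_eq_continuous _ _ _ (fun s => lerp (v m) (v m.+1) ((s - t m) / (t m.+1 - t m)))).
  move=> s; rewrite inE => /andP[h1 h2]; rewrite /from_subspace (tg m) //.
  by apply/andP.
apply: continuous_subspaceT; apply: lerpf_cont; exact: affine_cont.
Qed.
End PL2.
Section Arc.
Variable R : realType.
Local Notation pt := (R * R)%type.
Local Notation I := (@I01 R).

Lemma hausR2 : hausdorff_space pt.
Proof. exact: norm_hausdorff. Qed.

Lemma Icc_sub (a b : R) : 0 <= a -> b <= 1 -> Icc a b `<=` I.
Proof.
move=> a0 b1 x /andP[h1 h2]; apply/andP; split.
  exact: le_trans a0 h1.
exact: le_trans h2 b1.
Qed.

Lemma closed_img (g : R -> pt) (a b : R) : {within I, continuous g} ->
  0 <= a -> b <= 1 -> closed (g @` Icc a b).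
Proof.
move=> cg a0 b1; apply: compact_closed; first exact: hausR2.
apply: continuous_compact; last exact: compact_Icc.
exact: continuous_subspaceW (Icc_sub a0 b1) cg.
Qed.

Lemma down (g : R -> pt) (B : set pt) :
  {within I, continuous g} -> {in I &, injective g} ->
  connected (g @` I `&` B) -> B (g 0) ->
  forall s r, I s -> B (g s) -> 0 <= r <= s -> B (g r).
Proof.
move=> cg ig cA Bg0 s r Is Bgs /andP[r0 rs].
apply: contrapT => nBr.
have s1 : s <= 1 by case/andP: Is.
have r1 : r <= 1 by exact: le_trans rs s1.
have Ir : I r by apply/andP.
have rpos : 0 < r.
  rewrite lt_neqAle r0 andbT; apply/negP => /eqP r0'.
  by apply: nBr; rewrite -r0'.
have rlts : r < s.
  rewrite lt_neqAle rs andbT; apply/negP => /eqP rs'.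
  by apply: nBr; rewrite rs'.
set A := g @` I `&` B.
set C := g @` Icc 0 r.
have AC : A `&` C = A `&` ~` (g @` Icc r 1).
  apply/seteqP; split => x [Ax].
    move=> [q /andP[q0 qr] gqx]. subst x; split => //.
    move=> [q' /andP[rq' q'1] gq'].
    have Iq : I q by apply/andP; split => //; exact: le_trans qr r1.
    have Iq' : I q' by apply/andP; split => //; exact: le_trans r0 rq'.
    have qq' : q' = q by apply: ig; rewrite ?inE.
    have qr' : q = r by apply/eqP; rewrite eq_le qr -qq' rq'.
    by apply: nBr; rewrite -qr'; case: Ax => _; rewrite -gq' qq'.
  move=> nx; split => //; case: Ax => [[q Iq gq] _]; exists q => //.
  case/andP: Iq => q0 q1; apply/andP; split => //.
  rewrite leNgt; apply/negP => rq; apply: nx; exists q => //.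
  by apply/andP; split => //; exact: ltW.
have := cA (A `&` C).
have H1 : A `&` C !=set0.
  exists (g 0); split; first by split => //; exists 0 => //; apply/andP; split => //; exact: ler01.
  by exists 0 => //; apply/andP; split => //; exact: ltW.
have H2 : exists2 D, open D & A `&` C = A `&` D.
  exists (~` (g @` Icc r 1)) => //; rewrite openC; exact: closed_img.
have H3 : exists2 D, closed D & A `&` C = A `&` D.
  by exists C => //; exact: closed_img.
move=> /(_ H1 H2 H3) AC2.
have As : A (g s) by split => //; exists s.
have : (A `&` C) (g s) by rewrite AC2.
move=> -[_ [q /andP[q0 qr] gq]].
have Iq : I q by apply/andP; split => //; exact: le_trans qr r1.
have qs : q = s by apply: ig; rewrite ?inE.
by move: rlts; rewrite -qs ltNge qr.
Qed.
End Arc.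
Section Prod.
Context {X Y : topologicalType}.
Lemma fst_cont : continuous (@fst X Y).
Proof. by move=> [a b]; exact: cvg_fst. Qed.
Lemma snd_cont : continuous (@snd X Y).
Proof. by move=> [a b]; exact: cvg_snd. Qed.
Lemma closedX (A : set X) (B : set Y) : closed A -> closed B -> closed (A `*` B).
Proof.
move=> cA cB.
have -> : A `*` B = fst @^-1` A `&` snd @^-1` B by [].
apply: closedI.
  exact: (continuous_closedP _).1 fst_cont _ cA.
exact: (continuous_closedP _).1 snd_cont _ cB.
Qed.
End Prod.
Section RC.
Variable R : realType.
Context {T : topologicalType}.
Lemma cM (f h : T -> R) : continuous f -> continuous h -> continuous (fun p => f p * h p).
Proof. by move=> cf ch p; apply: (@continuousM R _ f h p (cf p) (ch p)). Qed.
Lemma cD (f h : T -> R) : continuous f -> continuous h -> continuous (fun p => f p + h p).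
Proof. by move=> cf ch p; apply: (@continuousD R R^o _ f h p (cf p) (ch p)). Qed.
Lemma cB (f h : T -> R) : continuous f -> continuous h -> continuous (fun p => f p - h p).
Proof. by move=> cf ch p; apply: (@continuousB R R^o _ f h p (cf p) (ch p)). Qed.
Lemma cC (c : R) : continuous (fun _ : T => c).
Proof. by move=> p; exact: cvg_cst. Qed.
Lemma cMin (f h : T -> R) : continuous f -> continuous h -> continuous (fun p => Num.min (f p) (h p)).
Proof. by move=> cf ch p; apply: (@continuous_min R _ f h p (cf p) (ch p)). Qed.
End RC.
Section RC2.
Variable R : realType.
Lemma cF : continuous (fun p : R * R => p.1).
Proof. exact: fst_cont. Qed.
Lemma cS : continuous (fun p : R * R => p.2).
Proof. exact: snd_cont. Qed.
Lemma cId : continuous (fun t : R => t).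
Proof. by move=> t; exact: cvg_id. Qed.
End RC2.
Section Stage.
Variable R : realType.
Local Notation pt := (R * R)%type.
Local Notation I := (@I01 R).

Lemma compactI01 : compact I.
Proof. have -> : I = Icc 0 1 by []. exact: compact_Icc. Qed.

Lemma closedI01 : closed I.
Proof. have -> : I = Icc 0 1 by []. exact: closed_Icc. Qed.

Lemma stage_cont (gk : R -> pt) (F : pt -> R -> pt) (phi : R * R -> R) :
  {within I, continuous gk} -> continuous phi ->
  (forall p, (I `*` I) p -> I (phi p)) ->
  (forall s u, I s -> I u -> F (gk s) u = gk (phi (s, u))) ->
  {within (gk @` I) `*` I, continuous (fun p => F p.1 p.2)}.
Proof.
move=> cg cphi phiI Feq.
pose G := fun p : R * R => (gk p.1, p.2).
have -> : (gk @` I) `*` I = G @` (I `*` I).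
  apply/seteqP; split.
    by move=> [x u] [/= [s Is <-] Iu]; exists (s, u).
  by move=> _ [[s u] [/= Is Iu] <-]; split => //=; exists s.
apply: (@inv_cont _ _ _ _ G (gk \o phi)).
- exact: norm_hausdorff.
- by apply: compact_setX; exact: compactI01.
- move=> p; apply: (@pair_cont_at (subspace (I `*` I)) pt R (fun p => gk p.1) (fun p => p.2)).
    have := @comp_within _ _ _ (I `*` I) I fst gk (continuous_subspaceT fst_cont) _ cg.
    by apply => // q [].
  by have := @continuous_subspaceT _ _ (I `*` I) _ snd_cont; apply.
- apply: comp_within cg => //; exact: continuous_subspaceT.
- by move=> [s u] [/= Is Iu]; rewrite /G /= Feq.
Qed.
End Stage.
Section Tree.
Variable R : realType.
Local Notation pt := (R * R)%type.
Local Notation I := (@I01 R).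
Variables (z : pt) (n : nat) (A : nat -> set pt) (g : nat -> R -> pt).
Hypothesis hc : forall i, (i < n)%N -> {within I, continuous g i}.
Hypothesis hi : forall i, (i < n)%N -> {in I &, injective (g i)}.
Hypothesis hA : forall i, (i < n)%N -> A i = g i @` I.
Hypothesis h0 : forall i, (i < n)%N -> g i 0 = z.
Hypothesis hconn : forall i j, (i < n)%N -> (j < n)%N -> connected (A i `&` A j).

Definition Y k := \bigcup_(i in [set i | (i < k)%N]) A i.

Lemma I0 : I 0.
Proof. by apply/andP; split => //; exact: ler01. Qed.
Lemma I1 : I 1.
Proof. by apply/andP; split => //; exact: ler01. Qed.

Lemma Y0 : Y 0 = set0.
Proof. by apply/seteqP; split => x // [i]. Qed.

Lemma YS k : Y k.+1 = Y k `|` A k.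
Proof.
apply/seteqP; split => x.
  move=> [i /= ik Ax]; move: ik; rewrite ltnS leq_eqVlt => /orP[/eqP ik|ik].
    by right; rewrite -ik.
  by left; exists i.
move=> [[i /= ik Ax]|Ax]; first by exists i => //=; exact: ltnW.
by exists k => //=.
Qed.

Lemma closedA i : (i < n)%N -> closed (A i).
Proof.
move=> hin; rewrite hA //; have -> : I = Icc 0 1 by [].
by apply: closed_img => //; exact: hc.
Qed.

Lemma closedY k : (k <= n)%N -> closed (Y k).
Proof.
elim: k => [_|k IH kn]; first by rewrite Y0; exact: closed0.
rewrite YS; apply: closedU; first exact: IH (ltnW kn).
exact: closedA.
Qed.

Lemma zA i : (i < n)%N -> A i z.
Proof. by move=> hin; rewrite hA //; exists 0; [exact: I0| exact: h0]. Qed.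

Lemma seg k : (0 < k)%N -> (k < n)%N ->
  exists a, I a /\ (forall s, I s -> (Y k (g k s) <-> s <= a)).
Proof.
move=> k0 kn.
have dn : forall s r, I s -> Y k (g k s) -> 0 <= r <= s -> Y k (g k r).
  move=> s r Is [j /= jk Aj] rs; exists j => //.
  have jn : (j < n)%N by exact: ltn_trans jk kn.
  apply: (@down _ (g k) (A j) (hc kn) (hi kn)) Is Aj rs.
    by rewrite -hA //; exact: hconn.
  by rewrite h0 //; exact: zA.
set S := [set s | I s /\ Y k (g k s)].
have S0 : S 0.
  split; first exact: I0.
  by exists 0%N => //; rewrite h0 //; apply: zA; exact: ltn_trans k0 kn.
have Sub : ubound S 1 by move=> s [/andP[_ ?] _].
have cS : closed S.
  have := (continuous_closedP _).1 (hc kn) (Y k) (closedY (ltnW kn)).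
  move=> /closed_subspaceP [V cV VI].
  have -> : S = V `&` I.
    rewrite VI; apply/seteqP; split => s; by move=> [? ?].
  by apply: closedI => //; exact: closed_Icc.
have hs : has_sup S by split; [exists 0|exists 1].
have Sa : S (sup S).
  have := closure_sup (ex_intro _ 0 S0) (ex_intro _ 1 Sub).
  by rewrite closure_id in cS; rewrite -cS.
exists (sup S); split; first by case: Sa.
move=> s Is; split.
  by move=> Ys; apply: sup_upper_bound => //.
move=> sa; apply: dn (proj1 Sa) (proj2 Sa) _.
by case/andP: Is => -> _.
Qed.


Definition ginv (h : R -> pt) (x : pt) : R := xget 0 [set s | I s /\ h s = x].

Lemma ginvI (h : R -> pt) x : (h @` I) x -> I (ginv h x) /\ h (ginv h x) = x.
Proof. by move=> [s Is hs]; apply: (@xgetPex _ 0 [set s | I s /\ h s = x]); exists s. Qed.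

Lemma ginvK (h : R -> pt) s : {in I &, injective h} -> I s -> ginv h (h s) = s.
Proof.
move=> ih Is; have [Ig hg] : I (ginv h (h s)) /\ h (ginv h (h s)) = h s by apply: ginvI; exists s.
by apply: ih; rewrite ?inE.
Qed.

Definition contr (X : set pt) := exists F : pt -> R -> pt,
  [/\ {within X `*` I, continuous (fun p => F p.1 p.2)},
      (forall x u, X x -> I u -> X (F x u)),
      (forall x, X x -> F x 0 = x) & (forall x, X x -> F x 1 = z)].

Lemma contr0 : contr (Y 0).
Proof.
rewrite Y0; exists (fun _ _ => z); split => //.
have -> : @set0 pt `*` I = set0 by apply/seteqP; split => [[x u] []|].
exact: continuous_subspace0.
Qed.

Lemma contr1 : (0 < n)%N -> contr (Y 1).
Proof.
move=> n0.
have Y1 : Y 1 = g 0 @` I by rewrite YS Y0 set0U hA.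
rewrite Y1.
exists (fun x u => g 0 ((1 - u) * ginv (g 0) x)); split.
- apply: (@stage_cont _ (g 0) (fun x u => g 0 ((1 - u) * ginv (g 0) x)) (fun p => (1 - p.2) * p.1)).
  + exact: hc.
  + by apply: cM; [apply: cB; [exact: cC|exact: cS]|exact: cF].
  + move=> [s u] [/= /andP[? ?] /andP[? ?]]; apply/andP; split; nra.
  + by move=> s u Is Iu /=; rewrite ginvK //; exact: hi.
- move=> x u Ax /andP[? ?]; exists ((1 - u) * ginv (g 0) x) => //.
  have [/andP[? ?] _] := ginvI Ax; apply/andP; split; nra.
- by move=> x Ax; rewrite subr0 mul1r; case: (ginvI Ax).
- by move=> x Ax; rewrite subrr mul0r h0.
Qed.


Lemma contrS k : (0 < k)%N -> (k < n)%N -> contr (Y k) -> contr (Y k.+1).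
Proof.
move=> k0 kn [Fk [cFk FkY Fk0 Fk1]].
have [a [Ia Ha]] := seg k0 kn.
have [a0 a1] : 0 <= a /\ a <= 1 by case/andP: Ia.
pose Phi x u := if pselect (Y k x) is left _ then x
                else g k (a + (1 - u) * (ginv (g k) x - a)).
pose phi := fun p : R * R => Num.min p.1 (a + (1 - p.2) * (p.1 - a)).
have PhiE : forall s u, I s -> I u -> Phi (g k s) u = g k (phi (s, u)).
  move=> s u Is Iu; rewrite /Phi /phi /=; case: pselect => Ys.
    have sa : s <= a by apply/Ha.
    case/andP: Iu => u0 u1.
    by rewrite min_l //; nra.
  have sa : a < s by rewrite ltNge; apply/negP => /(Ha _ Is).
  case/andP: Iu => u0 u1.
  by rewrite ginvK //; [rewrite min_r //; nra| exact: hi].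
have phiI : forall p, (I `*` I) p -> I (phi p).
  move=> [s u] [/= /andP[s0 s1] /andP[u0 u1]]; rewrite /phi /=.
  have [sa|sa] := leP s a.
    by rewrite min_l; [apply/andP|nra].
  rewrite min_r; [apply/andP; split; nra|nra].
have YSX : Y k.+1 `*` I = (Y k `*` I) `|` (A k `*` I).
  rewrite YS; apply/seteqP; split => -[x u] /=.
    by move=> [[?|?] ?]; [left|right].
  by move=> [[? ?]|[? ?]]; split => //; [left|right].
have cPhi : {within Y k.+1 `*` I, continuous (fun p => Phi p.1 p.2)}.
  rewrite YSX; apply: withinU_continuous.
  - by apply: closedX; [exact: closedY (ltnW kn)|exact: closedI01].
  - by apply: closedX; [exact: closedA|exact: closedI01].
  - apply: (@subspace_eq_continuous _ _ _ (fun p => p.1)).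
      move=> [x u]; rewrite inE => -[/= Yx _].
      by rewrite /from_subspace /Phi /=; case: pselect.
    exact: continuous_subspaceT fst_cont.
  - rewrite hA //; apply: (@stage_cont _ (g k) Phi phi) => //.
    + exact: hc.
    + by apply: cMin; [exact: cF|apply: cD; [exact: cC|apply: cM; [apply: cB; [exact: cC|exact: cS]|apply: cB; [exact: cF|exact: cC]]]].
have PhiY : forall x u, Y k.+1 x -> I u -> Y k.+1 (Phi x u) /\ (u = 1 -> Y k (Phi x u)).
  move=> x u Yx Iu; rewrite /Phi; case: pselect => Ykx.
    by split; [rewrite YS; left|].
  move: Yx; rewrite YS => -[//|Akx].
  have Akx' : (g k @` I) x by rewrite -hA.
  have [Is gs] := ginvI Akx'.
  set s := ginv (g k) x in Is gs *.
  have sa : a < s by rewrite ltNge; apply/negP => /(Ha _ Is); rewrite gs.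
  split.
    right; rewrite hA //; exists (a + (1 - u) * (s - a)) => //.
    case/andP: Iu => u0 u1; case/andP: (Is) => s0 s1; apply/andP; split; nra.
  by move=> ->; rewrite subrr mul0r addr0; apply/(Ha _ Ia).
pose F x u := if u <= 1/2 then Phi x (2 * u) else Fk (Phi x 1) (2 * u - 1).
have h2 : (2 : R) * (1/2) = 1 by rewrite mul1r divff // pnatr_eq0.
exists F; split.
- have -> : Y k.+1 `*` I = (Y k.+1 `*` Icc 0 (1/2)) `|` (Y k.+1 `*` Icc (1/2) 1).
    apply/seteqP; split => -[x u] /=.
      move=> [Yx /andP[u0 u1]]; have [uh|uh] := leP u (1/2).
        by left; split => //; apply/andP.
      by right; split => //; apply/andP; split => //; exact: ltW.
    move=> [[Yx /andP[u0 u1]]|[Yx /andP[u0 u1]]]; split => //; apply/andP; split => //.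
      by apply: le_trans u1 _; lra.
    by apply: le_trans _ u0; lra.
  apply: withinU_continuous.
  + by apply: closedX; [exact: closedY|exact: closed_Icc].
  + by apply: closedX; [exact: closedY|exact: closed_Icc].
  + apply: (@subspace_eq_continuous _ _ _ ((fun p => Phi p.1 p.2) \o (fun p => (p.1, 2 * p.2)))).
      move=> [x u]; rewrite inE => -[/= Yx /andP[u0 u1]].
      by rewrite /from_subspace /F /= u1.
    apply: comp_within cPhi.
      apply: continuous_subspaceT => p.
      apply: (@pair_cont_at _ pt R^o (fun p : pt * R => p.1) (fun p => 2 * p.2)).
        exact: fst_cont.
      by apply: (@continuousM R _ (fun=> 2) (fun p : pt * R => p.2)); [exact: cvg_cst|exact: snd_cont].
    move=> [x u] [/= Yx /andP[u0 u1]]; split => //; apply/andP; split; lra.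
  + apply: (@subspace_eq_continuous _ _ _ ((fun p => Fk p.1 p.2) \o (fun p => (Phi p.1 1, 2 * p.2 - 1)))).
      move=> [x u]; rewrite inE => -[/= Yx /andP[u0 u1]].
      rewrite /from_subspace /F /=; case: ifP => // uh.
      have -> : u = 1/2 by apply/eqP; rewrite eq_le uh u0.
      rewrite h2 subrr Fk0 //; apply: (proj2 (PhiY _ _ Yx I1)) => //.
    apply: comp_within cFk; last first.
      move=> [x u] [/= Yx /andP[u0 u1]]; split.
        exact: (proj2 (PhiY _ _ Yx I1)).
      apply/andP; split; lra.
    move=> p; apply: (@pair_cont_at (subspace (Y k.+1 `*` Icc (1/2) 1)) pt R^o (fun p : pt * R => Phi p.1 1) (fun p => 2 * p.2 - 1)).
      have := @comp_within _ _ _ (Y k.+1 `*` Icc (1/2) 1) (Y k.+1 `*` I) (fun p : pt * R => (p.1, 1)) (fun p => Phi p.1 p.2).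
      apply => //.
        apply: continuous_subspaceT => q.
        apply: (@pair_cont_at _ pt R^o (fun p : pt * R => p.1) (fun=> 1)); [exact: fst_cont|exact: cvg_cst].
      by move=> [x u] [/= Yx _]; split => //; exact: I1.
    have cg2 : continuous (fun p : pt * R => 2 * p.2 - 1).
      move=> q; apply: (@continuousB R R^o _ (fun p : pt * R => 2 * p.2) (fun=> 1)); last exact: cvg_cst.
      by apply: (@continuousM R _ (fun=> 2) (fun p : pt * R => p.2)); [exact: cvg_cst|exact: snd_cont].
    exact: (@continuous_subspaceT _ _ (Y k.+1 `*` Icc (1/2) 1) _ cg2 p).
- move=> x u Yx /andP[u0 u1]; rewrite /F; case: ifP => uh.
    by apply: (proj1 (PhiY _ _ Yx _)); apply/andP; split; lra.
  rewrite YS; left; apply: FkY; first exact: (proj2 (PhiY _ _ Yx I1)).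
  move/negbT: uh; rewrite -ltNge => uh; apply/andP; split; lra.
- move=> x Yx; rewrite /F ifT; last by lra.
  rewrite mulr0 /Phi; case: pselect => // Ykx.
  move: Yx; rewrite YS => -[//|Akx].
  have Akx' : (g k @` I) x by rewrite -hA.
  have [Is gs] := ginvI Akx'.
  by rewrite subr0 mul1r addrC subrK.
- move=> x Yx; rewrite /F ifF; last by apply/negbTE; rewrite -ltNge; lra.

  have -> : (2 : R) * 1 - 1 = 1 by lra.
  by rewrite Fk1 //; apply: (proj2 (PhiY _ _ Yx I1)).
Qed.

Lemma contrY k : (k <= n)%N -> contr (Y k).
Proof.
elim: k => [_|k IH kn]; first exact: contr0.
case: (posnP k) => [k0|kp].
  by rewrite k0; apply: contr1; rewrite -k0.
by apply: contrS => //; apply: IH; exact: ltnW.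
Qed.
End Tree.
Section Contr.
Variable R : realType.
Local Notation pt := (R * R)%type.
Local Notation I := (@I01 R).
Variables (X : set pt) (z : pt) (F : pt -> R -> pt).
Hypothesis cF0 : {within X `*` I, continuous (fun p => F p.1 p.2)}.
Hypothesis FX : forall x u, X x -> I u -> X (F x u).
Hypothesis F0 : forall x, X x -> F x 0 = x.
Hypothesis F1 : forall x, X x -> F x 1 = z.

Lemma Icc_split : I = Icc 0 (1/2) `|` Icc (1/2) 1.
Proof.
apply/seteqP; split => u /=.
  move=> /andP[u0 u1]; have [uh|uh] := leP u (1/2).
    by left; apply/andP.
  by right; apply/andP; split => //; exact: ltW.
move=> [/andP[u0 u1]|/andP[u0 u1]]; apply/andP; split => //.
  by apply: le_trans u1 _; lra.
by apply: le_trans _ u0; lra.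
Qed.

Lemma path_F (x : pt) (h : R -> R) : X x -> continuous h -> forall D : set R,
  (forall t, D t -> I (h t)) -> {within D, continuous (fun t => F x (h t))}.
Proof.
move=> Xx ch D hD.
have := @comp_within _ _ _ D (X `*` I) (fun t => (x, h t)) (fun p => F p.1 p.2).
apply => //.
  apply: continuous_subspaceT => t.
  apply: (@pair_cont_at _ pt R^o (fun=> x) h); [exact: cvg_cst|exact: ch].
by move=> t Dt; split => //; exact: hD.
Qed.

Lemma contr_path_connected : path_connected X.
Proof.
move=> x y Xx Xy.
exists (fun t => if t <= 1/2 then F x (2 * t) else F y (2 - 2 * t)); split.
- rewrite Icc_split; apply: withinU_continuous; [exact: closed_Icc|exact: closed_Icc| |].
  + apply: (@subspace_eq_continuous _ (Icc 0 (1/2)) _ (fun t => F x (2 * t))).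
      by move=> t; rewrite inE => /andP[t0 t1]; rewrite /from_subspace t1.
    apply: path_F => //.
      by apply: cM; [exact: cC|exact: cId].
    by move=> t /andP[t0 t1]; apply/andP; split; lra.
  + apply: (@subspace_eq_continuous _ (Icc (1/2) 1) _ (fun t => F y (2 - 2 * t))).
      move=> t; rewrite inE => /andP[t0 t1]; rewrite /from_subspace; case: ifP => // th.
      have -> : t = 1/2 by apply/eqP; rewrite eq_le th t0.
      have -> : (2 : R) * (1/2) = 1 by lra.
      by rewrite F1 // (_ : 2 - 1 = 1 :> R) ?F1 //; lra.
    apply: path_F => //.
      by apply: cB; [exact: cC|apply: cM; [exact: cC|exact: cId]].
    by move=> t /andP[t0 t1]; apply/andP; split; lra.
- move=> _ [t /andP[t0 t1] <-]; case: ifP => th.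
    by apply: FX => //; apply/andP; split; lra.
  by move/negbT: th; rewrite -ltNge => th; apply: FX => //; apply/andP; split; lra.
- by rewrite ifT ?mulr0 ?F0 //; lra.
- by rewrite ifF ?mulr1 ?subrr ?F0 //; apply/negbTE; rewrite -ltNge; lra.
Qed.


Definition cx (s : R) : R := Num.min 1 ((3 * s - 1) - Num.min (3 * s - 1) 0).
Definition cy (s : R) : R := Num.min 1 (Num.min (3 * s) (3 - 3 * s)).

Lemma ccx : continuous cx.
Proof.
apply: cMin; first exact: cC.
have h : continuous (fun s : R => 3 * s - 1) by apply: cB; [apply: cM; [exact: cC|exact: cId]|exact: cC].
by apply: cB => //; apply: cMin => //; exact: cC.
Qed.

Lemma ccy : continuous cy.
Proof.
apply: cMin; first exact: cC.
by apply: cMin; [apply: cM; [exact: cC|exact: cId]|apply: cB; [exact: cC|apply: cM; [exact: cC|exact: cId]]].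
Qed.

Lemma minP2 (a b : R) : (Num.min a b = a /\ a <= b) \/ (Num.min a b = b /\ b <= a).
Proof. by rewrite minEle; have [h|h] := leP a b; [left|right; split => //; exact: ltW]. Qed.

Ltac mincase := let s := match goal with |- context [cx ?s] => s | |- context [cy ?s] => s end in
  rewrite ?/cx ?/cy;
  first [case: (minP2 (3 * s - 1) 0) => -[-> ?] | case: (minP2 (3 * s) (3 - 3 * s)) => -[-> ?]];
  match goal with |- context [Num.min 1 ?e] => case: (minP2 1 e) => -[-> ?] end; lra.

Lemma cx_I s : I (cx s).
Proof. by apply/andP; split; mincase. Qed.
Lemma cx_lo s : s <= 1/3 -> cx s = 0.
Proof. by move=> h; mincase. Qed.
Lemma cx_hi s : 2/3 <= s -> cx s = 1.
Proof. by move=> h; mincase. Qed.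
Lemma cy_I s : I s -> I (cy s).
Proof. by move=> /andP[? ?]; apply/andP; split; mincase. Qed.
Lemma cy_mid s : 1/3 <= s -> s <= 2/3 -> cy s = 1.
Proof. by move=> ? ?; mincase. Qed.
Lemma cy0 : cy 0 = 0.
Proof. by mincase. Qed.
Lemma cy1 : cy 1 = 0.
Proof. by mincase. Qed.
Lemma cx0 : cx 0 = 0.
Proof. by mincase. Qed.
Lemma cx1 : cx 1 = 1.
Proof. by mincase. Qed.


Lemma contr_loops : loops_nullhomotopic X.
Proof.
move=> p cp pX p01.
have pIX : forall s, I s -> X (p s) by move=> s Is; apply: pX; exists s.
pose sg (q : R * R) := (1 - 2 * q.2) * q.1 + 2 * q.2 * cx q.1.
pose tu (q : R * R) := 2 * q.2 * cy q.1.
pose H q := if q.2 <= 1/2 then F (p (sg q)) (tu q)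
            else F (p 0) ((2 - 2 * q.2) * cy q.1).
have ccx1 : continuous (fun q : R * R => cx q.1).
  by move=> q; apply: continuous_comp; [exact: fst_cont|exact: ccx].
have ccy1 : continuous (fun q : R * R => cy q.1).
  by move=> q; apply: continuous_comp; [exact: fst_cont|exact: ccy].
have sgI : forall q, (I `*` Icc 0 (1/2)) q -> I (sg q).
  move=> [s u] [/= /andP[s0 s1] /andP[u0 u1]]; rewrite /sg /=.
  have /andP[c0 c1] := cx_I s.
  apply/andP; split; nra.
have tuI : forall q, (I `*` Icc 0 (1/2)) q -> I (tu q).
  move=> [s u] [/= Is /andP[u0 u1]]; rewrite /tu /=.
  have /andP[c0 c1] := cy_I Is.
  apply/andP; split; nra.
exists H; split.
- have -> : I `*` I = (I `*` Icc 0 (1/2)) `|` (I `*` Icc (1/2) 1).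
    apply/seteqP; split => -[s u] /=.
      move=> [Is /andP[u0 u1]]; have [uh|uh] := leP u (1/2); [left|right]; split => //; apply/andP; split => //.
      exact: ltW.
    by move=> [[Is /andP[u0 u1]]|[Is /andP[u0 u1]]]; split => //; apply/andP; split => //; lra.
  apply: withinU_continuous.
  + by apply: closedX; [exact: closedI01|exact: closed_Icc].
  + by apply: closedX; [exact: closedI01|exact: closed_Icc].
  + apply: (@subspace_eq_continuous _ (I `*` Icc 0 (1/2)) _ ((fun q => F q.1 q.2) \o (fun q => (p (sg q), tu q)))).
      by move=> [s u]; rewrite inE => -[/= Is /andP[u0 u1]]; rewrite /from_subspace /H /= u1.
    apply: comp_within cF0; last first.
      by move=> q Dq; split; [apply: pIX; exact: sgI|exact: tuI].
    move=> q; apply: (@pair_cont_at (subspace (I `*` Icc 0 (1/2))) pt R^o (fun q => p (sg q)) tu).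
      have := @comp_within _ _ _ (I `*` Icc 0 (1/2)) I sg p.
      apply => //; apply: continuous_subspaceT.
      apply: cD; apply: cM.
      * by apply: cB; [exact: cC|apply: cM; [exact: cC|exact: cS]].
      * exact: cF.
      * by apply: cM; [exact: cC|exact: cS].
      * exact: ccx1.
    have ctu : continuous tu by apply: cM => //; apply: cM; [exact: cC|exact: cS].
    exact: (@continuous_subspaceT _ _ (I `*` Icc 0 (1/2)) _ ctu q).
  + apply: (@subspace_eq_continuous _ (I `*` Icc (1/2) 1) _ ((fun q => F q.1 q.2) \o (fun q => (p 0, (2 - 2 * q.2) * cy q.1)))).
      move=> [s u]; rewrite inE => -[/= Is /andP[u0 u1]]; rewrite /from_subspace /H /=.
      case: ifP => // uh.
      have -> : u = 1/2 by apply/eqP; rewrite eq_le uh u0.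
      have -> : (2 : R) - 2 * (1/2) = 1 by lra.
      rewrite /sg /tu /=.
      have -> : (1 - 2 * (1/2)) * s + 2 * (1/2) * cx s = cx s by lra.
      have -> : (2 : R) * (1/2) * cy s = 1 * cy s by lra.
      have [s3|s3] := leP s (1/3); first by rewrite cx_lo.
      have [s23|s23] := leP (2/3) s; first by rewrite cx_hi // -p01.
      rewrite cy_mid; [|exact: ltW|exact: ltW].
      by rewrite !mul1r !F1 //; apply: pIX; first [exact: I0 | exact: cx_I].
    apply: comp_within cF0; last first.
      move=> [s u] [/= Is /andP[u0 u1]]; split; first by apply: pIX; exact: I0.
      have /andP[c0 c1] := cy_I Is.
      apply/andP; split; nra.
    apply: continuous_subspaceT => q.
    apply: (@pair_cont_at _ pt R^o (fun _ : R * R => p 0) (fun q : R * R => (2 - 2 * q.2) * cy q.1)); first exact: cvg_cst.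
    have : continuous (fun q : R * R => (2 - 2 * q.2) * cy q.1).
      by apply: cM => //; apply: cB; [exact: cC|apply: cM; [exact: cC|exact: cS]].
    by apply.
- move=> _ [[s u] [/= Is /andP[u0 u1]] <-]; rewrite /H /=; case: ifP => uh.
    by apply: FX; [apply: pIX; apply: sgI|apply: tuI]; split => //; apply/andP.
  apply: FX; first by apply: pIX; exact: I0.
  have /andP[c0 c1] := cy_I Is.
  move/negbT: uh; rewrite -ltNge => uh; apply/andP; split; nra.
- move=> s Is; rewrite /H /= ifT; last by lra.
  by rewrite /sg /tu /= !mulr0 subr0 mul1r !mul0r addr0 F0 //; exact: pIX.
- move=> s Is; rewrite /H /= ifF; last by apply/negbTE; rewrite -ltNge; lra.
  by rewrite mulr1 subrr mul0r F0 //; by apply: pIX; exact: I0.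
- move=> u /andP[u0 u1]; rewrite /H /sg /tu /= cx0 cy0 cx1 cy1.
  have e : (1 - 2 * u) * 1 + 2 * u * 1 = 1 :> R by lra.
  split; case: ifP => _; rewrite ?e -?p01 ?mulr0 ?addr0 ?mul0r ?F0 //; apply: pIX; exact: I0.
Qed.
End Contr.
Section Segs.
Variable R : realType.
Local Notation pt := (R * R)%type.
Local Notation I := (@I01 R).

Lemma PL_segs (ga : R -> pt) : PL_on01 ga -> exists (k : nat) (v : nat -> pt),
  [/\ (0 < k)%N, v 0%N = ga 0 &
   ga @` I = \bigcup_(l in [set l | (l < k)%N]) segment (v l) (v l.+1)].
Proof.
move=> [k [t [v [k0 t0 tk tinc tg]]]].
have tmono : forall i i', (i <= i')%N -> (i' <= k)%N -> t i <= t i'.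
  move=> i; elim=> [|i' IH] ii' i'k.
    by move: ii'; rewrite leqn0 => /eqP ->.
  move: ii'; rewrite leq_eqVlt => /orP[/eqP ->//|ii'].
  apply: le_trans (IH ii' (ltnW i'k)) _; exact/ltW/tinc.
have cover : forall m, (0 < m)%N -> (m <= k)%N -> forall s, t 0%N <= s <= t m ->
    exists2 j, (j < m)%N & t j <= s <= t j.+1.
  elim=> [//|m IH] _ mk s /andP[s0 s1].
  have [sm|sm] := leP s (t m).
    case: (posnP m) => [m0|mp].
      by exists 0%N => //; apply/andP; split => //; rewrite -m0.
    have [j jm js] := IH mp (ltnW mk) s (introT andP (conj s0 sm)).
    by exists j => //; exact: ltnW.
  by exists m => //; apply/andP; split => //; exact: ltW.
exists k, v; split => //.
  rewrite -t0 (tg 0%N) // ?subrr ?mul0r; last by apply/andP; split => //; exact/ltW/tinc.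
  by rewrite /lerp subr0 !mul1r !mul0r !addr0; case: (v 0%N).
apply/seteqP; split => x.
  move=> [s /andP[s0 s1] <-].
  have [j jk js] : exists2 j, (j < k)%N & t j <= s <= t j.+1.
    by apply: (cover k k0 (leqnn k) s); rewrite t0 tk; apply/andP.
  exists j => //; rewrite (tg j) //.
  exists ((s - t j) / (t j.+1 - t j)) => //.
  have d0 : 0 < t j.+1 - t j by rewrite subr_gt0; exact: tinc.
  case/andP: js => js1 js2.
  apply/andP; split.
    by apply: divr_ge0; [rewrite subr_ge0|exact: ltW].
  by rewrite ler_pdivrMr // mul1r lerB.
move=> [j /= jk [r /andP[r0 r1] <-]].
have d0 : 0 < t j.+1 - t j by rewrite subr_gt0; exact: tinc.
exists (t j + r * (t j.+1 - t j)).
  have tj0 : 0 <= t j by rewrite -t0; apply: tmono => //; exact: ltnW.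
  have tj1 : t j.+1 <= 1 by rewrite -tk; apply: tmono.
  apply/andP; split; nra.
rewrite (tg j) //; last by apply/andP; split; nra.
congr lerp; rewrite [t j + _]addrC addrK mulfK //; exact: lt0r_neq0 d0.
Qed.
End Segs.
Section Final.
Variable R : realType.
Local Notation pt := (R * R)%type.
Local Notation I := (@I01 R).

Lemma lerp_same (a : pt) t : lerp a a t = a.
Proof. by case: a => a1 a2; rewrite /lerp /= -!mulrDl subrK !mul1r. Qed.

Lemma lerp0 (a b : pt) : lerp a b 0 = a.
Proof. by case: a => a1 a2; rewrite /lerp /= subr0 !mul1r !mul0r !addr0. Qed.

Lemma homeo_refl (X : set pt) : homeomorphic X X.
Proof.
exists id, id; split => //.
- by apply: continuous_subspaceT => x; exact: cvg_id.
- by apply: continuous_subspaceT => x; exact: cvg_id.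
- by split => _ [x Xx <-].
Qed.

Definition pick_seg n K (kk : 'I_n -> nat) (vv : 'I_n -> nat -> pt) (j : nat) : pt * pt :=
  match (insub (j %/ K)%N : option 'I_n) with
  | Some i => if (j %% K < kk i)%N then (vv i (j %% K)%N, vv i (j %% K)%N.+1)
              else (vv i 0%N, vv i 0%N)
  | None => (0, 0)
  end.

Lemma segs_main n (alpha : 'I_n -> set pt) (kk : 'I_n -> nat) (vv : 'I_n -> nat -> pt) :
  (forall i, (0 < kk i)%N) ->
  (forall i, alpha i = \bigcup_(l in [set l | (l < kk i)%N]) segment (vv i l) (vv i l.+1)) ->
  finite_segment_union_homeomorphic (\bigcup_(i in [set: 'I_n]) alpha i).
Proof.
move=> kk0 hal.
set K := (\max_(i < n) kk i)%N.
have kkK : forall i, (kk i <= K)%N by move=> i; exact: leq_bigmax.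
have v0in : forall i, alpha i (vv i 0%N).
  by move=> i; rewrite hal; exists 0%N => //=; exists 0; [apply/andP; split => //; exact: ler01|exact: lerp0].
exists (n * K)%N, (fun j => (pick_seg K kk vv j).1), (fun j => (pick_seg K kk vv j).2).
suff -> : \bigcup_(i in [set: 'I_n]) alpha i =
   \bigcup_(j in [set: 'I_(n * K)]) segment (pick_seg K kk vv j).1 (pick_seg K kk vv j).2.
  exact: homeo_refl.
apply/seteqP; split => x.
  move=> [i _]; rewrite hal => -[l /= lk sx].
  have K0 : (0 < K)%N by apply: leq_trans (kk0 i) (kkK i).
  have lK : (l < K)%N by apply: leq_trans lk (kkK i).
  have jlt : (i * K + l < n * K)%N.
    apply: leq_trans (_ : ((i.+1) * K <= n * K)%N).
      by rewrite mulSn [(K + _)%N]addnC ltn_add2l.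
    by rewrite leq_mul2r ltn_ord orbT.
  exists (Ordinal jlt) => //=.
  rewrite /pick_seg /= divnMDl // divn_small // addn0 valK.
  by rewrite modnMDl modn_small // lk.
move=> [j _ sx].
have K0 : (0 < K)%N.
  case: (posnP K) => // K0.
  by move: (nat_of_ord j) (ltn_ord j) => jj; rewrite K0 muln0.
have jK : (j %/ K < n)%N by rewrite ltn_divLR //; exact: ltn_ord.
move: sx; rewrite /pick_seg; case: insubP => [i _ ival|]; last by rewrite jK.
case: ifP => lk sx.
  by exists i => //; rewrite hal; exists (j %% K)%N.
exists i => //; move: sx => [r _ <-]; rewrite lerp_same; exact: v0in.
Qed.
End Final.

Unset Implicit Arguments.

Theorem mainTheorem8 (R : realType) (n : nat) (alpha : 'I_n -> set (R * R))
    (z : R * R) :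
  (forall i, exists y, PL_arc (alpha i) z y) ->
  (forall i j, connected (alpha i `&` alpha j)) ->
  tree (\bigcup_(i in [set: 'I_n]) alpha i).
Proof.
move=> harc hconn.
have hPL : forall i, exists ga : R -> R * R,
    [/\ PL_on01 ga, {in @I01 R &, injective ga}, alpha i = ga @` @I01 R & ga 0 = z].
  by move=> i; have [y [ga [? ? ? ? _]]] := harc i; exists ga.
have [gam hgam] := choice hPL.
have cg : forall i, {within @I01 R, continuous gam i}.
  by move=> i; case: (hgam i) => ? _ _ _; exact: PL_cont.
have zal : forall i, alpha i z.
  by move=> i; case: (hgam i) => _ _ -> <-; exists 0 => //; exact: I0.
split.
- apply: bigcup_connected.
    by exists z => i _; exact: zal.
  move=> i _; case: (hgam i) => _ _ -> _; apply: connected_continuous_connected => //.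
  have -> : @I01 R = Icc 0 1 by [].
  rewrite Icc_itv; exact: segment_connected.
- pose A (i : nat) := if (insub i : option 'I_n) is Some j then alpha j else set0.
  pose g (i : nat) := if (insub i : option 'I_n) is Some j then gam j else fun=> z.
  have ins : forall i (hi : (i < n)%N), (insub i : option 'I_n) = Some (Ordinal hi).
    by move=> i hi; rewrite insubT.
  have hc : forall i, (i < n)%N -> {within @I01 R, continuous g i}.
    by move=> i hi; rewrite /g ins.
  have hinj : forall i, (i < n)%N -> {in @I01 R &, injective (g i)}.
    by move=> i hi; rewrite /g ins; case: (hgam (Ordinal hi)).
  have hA : forall i, (i < n)%N -> A i = g i @` @I01 R.
    by move=> i hi; rewrite /g /A ins; case: (hgam (Ordinal hi)).
  have h0 : forall i, (i < n)%N -> g i 0 = z.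
    by move=> i hi; rewrite /g ins; case: (hgam (Ordinal hi)).
  have hconn' : forall i j, (i < n)%N -> (j < n)%N -> connected (A i `&` A j).
    by move=> i j hi' hj'; rewrite /A !ins.
  have XY : \bigcup_(i in [set: 'I_n]) alpha i = Y A n.
    apply/seteqP; split => x.
      by move=> [i _ ax]; exists (val i) => //=; rewrite /A valK.
    move=> [i /= hi' ax]; exists (Ordinal hi') => //.
    by move: ax; rewrite /A ins.
  have [F [cF FX F0 F1]] := contrY hc hinj hA h0 hconn' (leqnn n).
  rewrite XY; split.
    exact: contr_path_connected cF FX F0 F1.
  exact: contr_loops cF FX F0 F1.
- have hS : forall i, exists kv : nat * (nat -> R * R), (0 < kv.1)%N /\
      alpha i = \bigcup_(l in [set l | (l < kv.1)%N]) segment (kv.2 l) (kv.2 l.+1).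
    move=> i; case: (hgam i) => hpl _ -> _.
    by have [k [v [k0 _ e]]] := PL_segs hpl; exists (k, v).
  have [kv hkv] := choice hS.
  by apply: (@segs_main _ n alpha (fun i => (kv i).1) (fun i => (kv i).2)) => i; case: (hkv i).
Qed.
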